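(* Let $\mathbb{K}$ be an algebraically closed field of characteristic zero and let $Y=V\times\mathbb{A}^1$ for an irreducible affine variety $V$. Then $Y$ is of type A, i.e. $\mathrm{HD}^*(Y\times\mathbb{A}^1)=\mathbb{K}[Y\times\mathbb{A}^1]$.
   Context: A derivation is locally nilpotent (LND) if every element is killed by some power of it. A slice of an LND $\partial$ is an element $s$ with $\partial(s)=1$. For an affine variety $X$, $\mathrm{HD}^*(X)$ is the $\mathbb{K}$-subalgebra of $\mathbb{K}[X]$ generated by the kernels of all LNDs of $\mathbb{K}[X]$ that have a slice. *)

(* Defs.v *)
From HB Require Import structures.
From mathcomp Require Import all_boot all_order all_algebra.
Set Implicit Arguments. Unset Strict Implicit. Unset Printing Implicit Defensive.
Import GRing.Theory.
Local Open Scope ring_scope.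

(* Setting: a commutative ring R viewed as a K-algebra via the structure map
   [iK : K -> R] (a ring morphism in all our uses). *)

Inductive gen_alg (K : fieldType) (R : comNzRingType) (iK : K -> R)
    (S : R -> Prop) : R -> Prop :=
  | gen_alg_in x : S x -> gen_alg iK S x
  | gen_alg_scal k : gen_alg iK S (iK k)
  | gen_alg_add x y : gen_alg iK S x -> gen_alg iK S y -> gen_alg iK S (x + y)
  | gen_alg_mul x y : gen_alg iK S x -> gen_alg iK S y -> gen_alg iK S (x * y).

Definition is_Kderivation (K : fieldType) (R : comNzRingType) (iK : K -> R)
    (D : R -> R) : Prop :=
  [/\ forall x y, D (x + y) = D x + D y,
      forall x y, D (x * y) = D x * y + x * D y &
      forall k, D (iK k) = 0].

Definition is_LND (K : fieldType) (R : comNzRingType) (iK : K -> R)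
    (D : R -> R) : Prop :=
  is_Kderivation iK D /\ forall x, exists n : nat, iter n D x = 0.

Definition has_slice (R : comNzRingType) (D : R -> R) : Prop :=
  exists s, D s = 1.

Definition HDstar (K : fieldType) (R : comNzRingType) (iK : K -> R) : R -> Prop :=
  gen_alg iK (fun x => exists D, [/\ is_LND iK D, has_slice D & D x = 0]).

Definition fin_gen_alg (K : fieldType) (A : comAlgType K) : Prop :=
  exists s : seq A, forall a : A, gen_alg (fun k : K => k%:A : A) (fun x => x \in s) a.

Definition is_domain (A : comNzRingType) : Prop :=
  forall a b : A, a * b = 0 -> a = 0 \/ b = 0.

(* Structure map K -> A[x][y] = K[V x A^1 x A^1]. *)
Definition iK2 (K : fieldType) (A : comAlgType K) (k : K) : {poly {poly A}} :=
  ((k%:A : A)%:P)%:P.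

(* Main.v *)
Require Import Defs.
From mathcomp Require Import all_boot all_order all_algebra.
Local Open Scope ring_scope.
Import GRing.Theory.

Section Aux.
Variable (K : fieldType) (A : comAlgType K).
Local Notation R := {poly {poly A}}.

Definition D2 (f : R) : R := map_poly (fun c : {poly A} => deriv c) f.

Lemma coefD2 f i : (D2 f)`_i = (f`_i)^`().
Proof. by rewrite /D2 coef_map_id0 // deriv0. Qed.

Lemma D2D f g : D2 (f + g) = D2 f + D2 g.
Proof. by apply/polyP=> i; rewrite coefD !coefD2 coefD derivD. Qed.

Lemma D2M f g : D2 (f * g) = D2 f * g + f * D2 g.
Proof.
apply/polyP=> i; rewrite coefD coefD2 !coefM.
rewrite (raddf_sum (@deriv _)) /=.
rewrite -big_split /=; apply: eq_bigr => j _.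
by rewrite !coefD2 derivM.
Qed.

Lemma iterD2 n f i : (iter n D2 f)`_i = iter n deriv f`_i.
Proof. by elim: n => //= n IH; rewrite coefD2 IH. Qed.

End Aux.

Theorem corollary4 (K : closedFieldType) (hchar : [pchar K] =i pred0)
    (A : comAlgType K) (hfg : fin_gen_alg A) (hdom : is_domain A) :
  forall f : {poly {poly A}}, HDstar (@iK2 K A) f.
Proof.
have iK0 : forall k : K, (@iK2 K A k)^`() = 0.
  by move=> k; rewrite /iK2 derivC.
have iK0' : forall k : K, @D2 K A (@iK2 K A k) = 0.
  by move=> k; apply/polyP=> i; rewrite coefD2 /iK2 coefC coef0;
     case: (i == 0)%N; rewrite ?derivC ?deriv0.
have LND1 : is_LND (@iK2 K A) (@deriv _).
  split; first by split=> [x y|x y|k]; rewrite ?derivD ?derivM ?iK0.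
  move=> x; exists (size x); exact: (derivn_poly0 (leqnn _)).
have LND2 : is_LND (@iK2 K A) (@D2 K A).
  split; first by split=> [x y|x y|k]; rewrite ?D2D ?D2M ?iK0'.
  move=> x; exists (\max_(i < size x) size (x`_i)%R)%N.
  apply/polyP=> i; rewrite iterD2 coef0.
  have [lti|] := ltnP i (size x).
    apply: derivn_poly0.
    exact: (@leq_bigmax _ (fun j : 'I_(size x) => size (x`_j)%R) (Ordinal lti)).
  by move=> ge; rewrite nth_default // -/(derivn _ _) derivn_poly0 // size_poly0.
have HC : forall p : {poly A}, HDstar (@iK2 K A) p%:P.
  move=> p; apply: gen_alg_in; exists (@deriv _); split => //.
    by exists 'X; rewrite derivX.
  by rewrite derivC.
have HX : HDstar (@iK2 K A) 'X.
  apply: gen_alg_in; exists (@D2 K A); split => //.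
    exists ('X)%:P; apply/polyP=> i; rewrite coefD2 !coefC.
    by case: (i == 0)%N; rewrite ?derivX ?deriv0.
  apply/polyP=> i; rewrite coefD2 coefX coef0.
  by case: (i == 1)%N; rewrite ?derivC ?deriv0.
move=> f; rewrite -[f]coefK poly_def.
apply: (big_ind (HDstar (@iK2 K A))).
- by rewrite -polyC0; apply: HC.
- by move=> x y; apply: gen_alg_add.
move=> i _; rewrite -mul_polyC; apply: gen_alg_mul; first exact: HC.
elim: (nat_of_ord i) => [|n IH]; first by rewrite expr0 -polyC1; apply: HC.
by rewrite exprS; apply: gen_alg_mul.
Qed.
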